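(* For any odd prime $p$ and any non-negative integer $k$, \[ C^{(-k-1)}_{p-2}\equiv\begin{cases}0\pmod p & \text{if } k\not\equiv 0\pmod{p-1},\\ 1\pmod p & \text{if } k\equiv 0\pmod{p-1}.\end{cases} \]
   Context: For any integer $k$, let $\mathrm{Li}_k(t)=\sum_{n=1}^{\infty} t^n/n^k$. The poly-Bernoulli numbers of type $C$, $C^{(k)}_n$ ($n\ge0$), are defined by $\frac{\mathrm{Li}_k(1-e^{-t})}{e^{t}-1}=\sum_{n=0}^{\infty}C^{(k)}_n\frac{t^n}{n!}$. For negative upper index these are integers. *)

(* Defs.v *)
(* Formal power series over rat, represented as nat -> rat
   (coefficient of t^n). *)
From mathcomp Require Import all_boot all_order all_algebra.
Set Implicit Arguments. Unset Strict Implicit. Unset Printing Implicit Defensive.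
Import Order.TTheory GRing.Theory Num.Theory.
Local Open Scope ring_scope.

Definition fps := nat -> rat.

Definition fmul (f g : fps) : fps :=
  fun n => \sum_(0 <= i < n.+1) f i * g (n - i)%N.

Definition fone : fps := fun n => if n == 0%N then 1 else 0.

Fixpoint fpow (f : fps) (m : nat) : fps :=
  if m is m'.+1 then fmul f (fpow f m') else fone.

Definition one_minus_expneg : fps :=
  fun n => if n == 0%N then 0 else - ((-1) ^+ n / (n`!)%:R).

Definition expm1 : fps :=
  fun n => if n == 0%N then 0 else 1 / (n`!)%:R.

(* Li_k(x) = sum_{n>=1} x^n / n^k, as formal power series in x,
   k an arbitrary integer *)
Definition Li_coef (k : int) (n : nat) : rat :=
  if n == 0%N then 0 else ((n%:R : rat) ^ k)^-1.

(* composition Li_k(u(t)) with u(0) = 0: only terms m <= N contribute to t^N *)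
Definition fcomp_Li (k : int) (u : fps) : fps :=
  fun N => \sum_(0 <= m < N.+1) Li_coef k m * fpow u m N.

(* inverse of a power series g with g 0 = 1, coefficients 0..n *)
Fixpoint inv_list (g : fps) (n : nat) : seq rat :=
  if n is n'.+1 then
    let s := inv_list g n' in
    rcons s (- \sum_(0 <= i < n) g (n - i)%N * nth 0 s i)
  else [:: 1].

Definition finv1 (g : fps) : fps := fun n => nth 0 (inv_list g n) n.

(* division f / g where f 0 = g 0 = 0 and g 1 = 1: (f/t) * (g/t)^{-1} *)
Definition fdiv_t (f g : fps) : fps :=
  fmul (fun n => f n.+1) (finv1 (fun n => g n.+1)).

Definition polyBernC_egf (k : int) : fps :=
  fdiv_t (fcomp_Li k one_minus_expneg) expm1.

Definition polyBernC (k : int) (n : nat) : rat :=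
  (n`!)%:R * polyBernC_egf k n.

(* Main.v *)
Require Import Defs.
From mathcomp Require Import all_boot all_order all_algebra all_field.
From mathcomp Require Import ring zify.
Import Order.TTheory GRing.Theory Num.Theory.
Local Open Scope ring_scope.

Definition tp (N : nat) (f : fps) : {poly rat} := \poly_(i < N.+1) f i.

Lemma fmul_poly f g N n : (n <= N)%N -> fmul f g n = (tp N f * tp N g)`_n.
Proof.
move=> hn; rewrite coefM /fmul big_mkord; apply: eq_bigr => i _.
rewrite !coef_poly.
have h1 : (i < N.+1)%N by apply: leq_trans (ltn_ord i) _.
have h2 : (n - i < N.+1)%N by rewrite ltnS (leq_trans (leq_subr _ _)).
by rewrite h1 h2.
Qed.

Lemma coefM_locl (A B C : {poly rat}) n :
  (forall j, (j <= n)%N -> A`_j = B`_j) -> (A * C)`_n = (B * C)`_n.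
Proof.
move=> h; rewrite !coefM; apply: eq_bigr => i _; rewrite h //.
by rewrite -ltnS.
Qed.

Lemma fmul_comm f g n : fmul f g n = fmul g f n.
Proof. by rewrite !(@fmul_poly _ _ n n (leqnn n)) mulrC. Qed.

Lemma fmul_assoc f g h n : fmul (fmul f g) h n = fmul f (fmul g h) n.
Proof.
rewrite !(@fmul_poly _ _ n n (leqnn n)).
rewrite (@coefM_locl _ (tp n f * tp n g)); last first.
  by move=> j hj; rewrite coef_poly ltnS hj (@fmul_poly _ _ n j hj).
rewrite (mulrC (tp n f) (tp n (fmul g h))).
rewrite (@coefM_locl (tp n (fmul g h)) (tp n g * tp n h)); last first.
  by move=> j hj; rewrite coef_poly ltnS hj (@fmul_poly _ _ n j hj).
by rewrite (mulrC _ (tp n f)) mulrA.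
Qed.

Lemma fmul_extl f f' g n : (forall j, (j <= n)%N -> f j = f' j) ->
  fmul f g n = fmul f' g n.
Proof.
move=> h; rewrite /fmul; apply: eq_big_nat => i /andP[_ hi].
by rewrite h // -ltnS.
Qed.

Lemma fmul_extr f g g' n : (forall j, (j <= n)%N -> g j = g' j) ->
  fmul f g n = fmul f g' n.
Proof.
by move=> h; rewrite fmul_comm (@fmul_extl g g' f n h) fmul_comm.
Qed.

Lemma fmul1r g n : fmul fone g n = g n.
Proof.
rewrite /fmul big_nat_recl // /fone /= mul1r subn0 big1 ?addr0 // => i _.
by rewrite mul0r.
Qed.

Lemma fmulr1 g n : fmul g fone n = g n.
Proof. by rewrite fmul_comm fmul1r. Qed.

Lemma fmul_sumr I (r : seq I) (c : I -> rat) f (F : I -> fps) n :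
  fmul f (fun j => \sum_(i <- r) c i * F i j) n = \sum_(i <- r) c i * fmul f (F i) n.
Proof.
rewrite /fmul; under eq_bigr do rewrite mulr_sumr.
rewrite exchange_big /=; apply: eq_bigr => i _; rewrite mulr_sumr.
by apply: eq_bigr => j _; rewrite mulrCA.
Qed.

Lemma fmul_suml I (r : seq I) (c : I -> rat) f (F : I -> fps) n :
  fmul (fun j => \sum_(i <- r) c i * F i j) f n = \sum_(i <- r) c i * fmul (F i) f n.
Proof.
rewrite fmul_comm fmul_sumr; apply: eq_bigr => i _; by rewrite fmul_comm.
Qed.

Lemma fmul_zero f g n : (forall j, (j <= n)%N -> g j = 0) -> fmul f g n = 0.
Proof.
move=> h; rewrite /fmul big1_seq // => i /andP[_]; rewrite mem_iota add0n => /andP[_ hi].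
by rewrite h ?mulr0 // leq_subr.
Qed.

Lemma fmul_shift f g N : f 0%N = 0 ->
  fmul f g N.+1 = fmul (fun n => f n.+1) g N.
Proof.
move=> h0; rewrite /fmul big_nat_recl // h0 mul0r add0r.
by apply: eq_bigr => i _; rewrite subSS.
Qed.

Lemma inv_list_size g n : size (inv_list g n) = n.+1.
Proof. by elim: n => //= n ih; rewrite size_rcons ih. Qed.

Lemma inv_list_nth g n i : (i <= n)%N -> nth 0 (inv_list g n) i = finv1 g i.
Proof.
elim: n => [|n ih]; first by rewrite leqn0 => /eqP ->.
rewrite leq_eqVlt => /orP[/eqP ->//|hi].
by rewrite /= nth_rcons inv_list_size hi ih.
Qed.

Lemma finv1S g n : finv1 g n.+1 =
  - \sum_(0 <= i < n.+1) g (n.+1 - i)%N * finv1 g i.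
Proof.
rewrite {1}/finv1 /= nth_rcons inv_list_size ltnn eqxx.
congr (- _); apply: eq_big_nat => i /andP[_ hi].
by rewrite inv_list_nth // -ltnS.
Qed.

Lemma fmul_finv g n : g 0%N = 1 -> fmul g (finv1 g) n = fone n.
Proof.
move=> g0; case: n => [|n].
  by rewrite /fmul big_nat1 g0 mul1r /finv1.
rewrite fmul_comm /fmul big_nat_recr //= subnn g0 mulr1 finv1S.
rewrite /fone /=; apply/eqP; rewrite subr_eq0; apply/eqP.
by apply: eq_bigr => i _; rewrite mulrC.
Qed.
Definition E (a : rat) : fps := fun n => a ^+ n / (n`!)%:R.

Lemma fact_neq0 n : (n`!)%:R != 0 :> rat.
Proof. by rewrite pnatr_eq0 -lt0n fact_gt0. Qed.

Lemma fmulE a b n : fmul (E a) (E b) n = E (a + b) n.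
Proof.
rewrite /E addrC exprDn mulr_suml /fmul big_mkord; apply: eq_bigr => i _.
have hi : (i <= n)%N by rewrite -ltnS.
have hf : (n`!)%:R = ('C(n,i))%:R * ((i`!)%:R * ((n-i)`!)%:R) :> rat.
  by rewrite -!natrM bin_fact.
have hc : ('C(n,i))%:R != 0 :> rat by rewrite pnatr_eq0 -lt0n bin_gt0.
have h1 := fact_neq0 i; have h2 := fact_neq0 (n - i).
rewrite hf -mulr_natr; field.
by rewrite h1 h2 hc.
Qed.

Definition A (j : nat) : fps :=
  fun n => \sum_(i < j.+1) ('C(j,i)%:R * (-1)^+i) * E (- i%:R) n.

Lemma E0 n : E 0 n = fone n.
Proof. by rewrite /E expr0n /fone; case: n => //= n; rewrite mul0r. Qed.

Lemma u_A1 n : one_minus_expneg n = A 1 n.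
Proof.
rewrite /A big_ord_recr big_ord1 /= oppr0 E0 /fone /one_minus_expneg /E.
case: n => [|n] /=; rewrite bin0 binn ?fact0 /=; field; rewrite ?fact_neq0 ?oner_neq0 //.
Qed.

Lemma pascal j (x : nat -> rat) :
  \sum_(i < j.+2) ('C(j.+1,i)%:R * (-1)^+i) * x i =
  \sum_(i < j.+1) ('C(j,i)%:R * (-1)^+i) * x i -
  \sum_(i < j.+1) ('C(j,i)%:R * (-1)^+i) * x i.+1.
Proof.
rewrite big_ord_recl.
under eq_bigr => i _ do rewrite /bump /= binS natrD mulrDl mulrDl.
rewrite big_split /= addrA.
congr (_ + _).
  rewrite big_ord_recr /= (bin_small (ltnSn j)) mul0r mul0r addr0.
  by rewrite [RHS]big_ord_recl /= !bin0.
rewrite -sumrN; apply: eq_bigr => i _.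
by rewrite exprS mulN1r mulrN mulNr.
Qed.

Lemma fmulE' a b n : fmul (fun k => E a k) (fun k => E b k) n = E (a + b) n.
Proof. exact: fmulE. Qed.

Lemma fpow_u j n : fpow one_minus_expneg j n = A j n.
Proof.
elim: j n => [|j ih] n.
  by rewrite /= /A big_ord1 /= oppr0 E0 bin0 expr0 !mul1r.
rewrite /= (@fmul_extr _ _ (A j) n); last by move=> *; exact: ih.
rewrite (@fmul_extl _ (A 1) _ n); last by move=> *; exact: u_A1.
rewrite /A fmul_suml big_ord_recr big_ord1 /=.
rewrite !fmul_sumr bin0 binn expr0 expr1 !mul1r mulN1r.
rewrite (eq_bigr (fun i : 'I_j.+1 => ('C(j,i)%:R * (-1)^+i) * E (-0 - i%:R) n)); last first.
  by move=> i _; congr (_ * _); exact: fmulE.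
rewrite [X in _ - X](eq_bigr (fun i : 'I_j.+1 => ('C(j,i)%:R * (-1)^+i) * E (- (i.+1)%:R) n)); last first.
  move=> i _; congr (_ * _); rewrite fmulE; congr (E _ n).
  rewrite -natr1 /=; ring.
rewrite (pascal j (fun i => E (- i%:R) n)); congr (_ - _); apply: eq_bigr => i _.
by rewrite oppr0 sub0r.
Qed.

Lemma Li_neg m r : Li_coef (- (m%:Z)) r = if r == 0%N then 0 else (r%:R)^+m.
Proof. by rewrite /Li_coef; case: (r == 0%N) => //; rewrite -exprnN invrK. Qed.

Lemma u0 : one_minus_expneg 0%N = 0.
Proof. by []. Qed.

Lemma fpow_low r n : (n < r)%N -> fpow one_minus_expneg r n = 0.
Proof.
elim: r n => [|r ih] n //= hn.
rewrite /fmul big_nat_recl // u0 mul0r add0r big1_seq // => i /andP[_].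
rewrite mem_iota add0n => /andP[_ hi].
rewrite ih ?mulr0 //.
by lia.
Qed.

Lemma fmul_subl f g h n :
  fmul (fun k => f k - g k) h n = fmul f h n - fmul g h n.
Proof. by rewrite /fmul -sumrB; apply: eq_bigr => i _; rewrite mulrBl. Qed.

Lemma u_fact n : one_minus_expneg n = fmul expm1 (E (-1)) n.
Proof.
rewrite (@fmul_extl _ (fun k => E 1 k - fone k)); last first.
  move=> j _; rewrite /expm1 /E /fone; case: j => [|j] /=.
    by rewrite expr0 fact0 divr1 subrr.
  by rewrite expr1n subr0.
rewrite fmul_subl fmulE fmul1r subrr E0 u_A1 /A big_ord_recr big_ord1 /=.
by rewrite oppr0 E0 bin0 binn expr0 expr1 !mul1r mulN1r.
Qed.

Section Main.
Variable m : nat.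
Let u := one_minus_expneg.
Let c (r : nat) : rat := ((r.+1)%:R)^+m.
Definition G : fps := fun n => \sum_(0 <= r < n.+1) c r * fpow u r n.
Definition H : fps := fmul (E (-1)) G.
Let sY : fps := fun n => expm1 n.+1.

Lemma G_ext i M : (i < M)%N -> G i = \sum_(0 <= r < M) c r * fpow u r i.
Proof.
move=> hi; rewrite (@big_cat_nat _ _ _ i.+1) //= [X in _ + X]big1_seq ?addr0 //.
move=> r /andP[_]; rewrite mem_iota => /andP[hr _].
by rewrite fpow_low ?mulr0.
Qed.

Lemma H_sum j M : (j < M)%N ->
  H j = \sum_(0 <= r < M) c r * fmul (E (-1)) (fpow u r) j.
Proof.
move=> hj; rewrite /H (@fmul_extr _ _ (fun i => \sum_(0 <= r < M) c r * fpow u r i)).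
  by rewrite fmul_sumr.
by move=> i hi; apply: G_ext; apply: leq_ltn_trans hj.
Qed.

Lemma claim1 N : fcomp_Li (- (m%:Z)) u N.+1 = fmul sY H N.
Proof.
rewrite /fcomp_Li big_nat_recl // Li_neg eqxx mul0r add0r.
rewrite (@fmul_extr _ _ (fun j => \sum_(0 <= r < N.+1) c r * fmul (E (-1)) (fpow u r) j)); last first.
  by move=> j hj; rewrite (@H_sum j N.+1).
rewrite fmul_sumr; apply: eq_bigr => r _.
rewrite Li_neg /=; congr (_ * _).
rewrite (@fmul_extl _ (fmul expm1 (E (-1)))); last by move=> *; exact: u_fact.
by rewrite fmul_assoc fmul_shift.
Qed.

Lemma claim3 n : polyBernC_egf (- (m%:Z)) n = H n.
Proof.
rewrite /polyBernC_egf /fdiv_t.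
rewrite (@fmul_extl _ (fmul sY H)); last by move=> *; exact: claim1.
rewrite (@fmul_extl _ (fmul H sY)); last by move=> *; exact: fmul_comm.
rewrite fmul_assoc (@fmul_extr _ _ fone); first by rewrite fmulr1.
by move=> j _; apply: fmul_finv; rewrite /sY /expm1 /= divr1.
Qed.

End Main.

Definition cval (R : pzRingType) (n m : nat) : R :=
  \sum_(r < n.+1) ((r.+1)%:R)^+m *
    \sum_(i < r.+1) ('C(r,i)%:R * (-1)^+i) * (- (i.+1)%:R)^+n.

Lemma polyBernC_cval m n : polyBernC (- (m%:Z)) n = cval rat n m.
Proof.
rewrite /polyBernC claim3 (@H_sum m n n.+1 (ltnSn n)) big_mkord mulr_sumr.
apply: eq_bigr => r _; rewrite mulrCA; congr (_ * _).
rewrite (@fmul_extr _ _ (A r)); last by move=> *; exact: fpow_u.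
rewrite /A fmul_sumr mulr_sumr; apply: eq_bigr => i _.
rewrite mulrCA; congr (_ * _).
rewrite -[fmul _ _ n]/(fmul (E (-1)) (E (- i%:R)) n) fmulE /E mulrC divfK ?fact_neq0 //.
by rewrite -natr1 opprD addrC.
Qed.
Section Fp.
Variable p : nat.
Hypothesis hp : prime p.
Local Notation F := ('F_p).

Lemma chF : p \in [pchar F]. Proof. exact: pchar_Fp. Qed.

Lemma natF_neq0 i : (0 < i)%N -> (i < p)%N -> (i%:R : F) != 0.
Proof.
move=> h0 hi; rewrite -(dvdn_pcharf chF); apply/negP => /(dvdn_leq h0).
by rewrite leqNgt hi.
Qed.

Lemma fermat (x : F) : x != 0 -> x ^+ p.-1 = 1.
Proof.
move=> hx; apply: (mulfI hx); rewrite mulr1 -exprS prednK ?prime_gt0 //.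
by have := expf_card x; rewrite card_Fp.
Qed.

Lemma sumF (G : F -> F) : \sum_(x : F) G x = \sum_(i < p) G (i%:R).
Proof.
have e : forall n1 n2, n1 = n2 -> \sum_(0 <= i < n1) G i%:R = \sum_(0 <= i < n2) G i%:R.
  by move=> ? ? ->.
rewrite -(big_mkord xpredT (fun i => G i%:R)) -(e _ _ (Fp_cast hp)) big_mkord.
by apply: eq_bigr => x _; rewrite natr_Zp.
Qed.

Lemma powsum k : \sum_(i < p.-1) ((i.+1)%:R : F) ^+ k =
  if (p.-1 %| k)%N then -1 else 0.
Proof.
have hp1 : p = p.-1.+1 by rewrite prednK ?prime_gt0.
have -> : \sum_(i < p.-1) ((i.+1)%:R : F) ^+ k = \sum_(x : F | x != 0) x ^+ k.
  rewrite [RHS]big_mkcond sumF /=.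
  have e : forall n1 n2 (f : nat -> F), n1 = n2 ->
     \sum_(i < n1) f i = \sum_(i < n2) f i by move=> ? ? ? ->.
  rewrite (e _ _ (fun i => if (i%:R : F) != 0 then (i%:R : F) ^+ k else 0) hp1).
  rewrite big_ord_recl /= add0r; apply: eq_bigr => i _.
  have -> : bump 0 i = i.+1 by [].
  rewrite natF_neq0 //. by rewrite {2}hp1 ltnS.
case: ifP => hd.
  rewrite (eq_bigr (fun _ => 1)); last first.
    move=> x hx; case/dvdnP: hd => t ->.
    by rewrite mulnC exprM fermat // expr1n.
  rewrite sumr_const cardC1 card_Fp //.
  have h0 : ((p.-1).+1%:R : F) = 0 by rewrite -hp1 (pchar_Fp_0 hp).
  by move/eqP: h0; rewrite -natr1 addr_eq0 => /eqP.
have [z zr zprim] : exists2 z, z \in enum (predC1 (0 : F)) & (p.-1).-primitive_root z.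
  apply/hasP; apply: cyclic.has_prim_root.
  - by rewrite -ltnS -hp1 prime_gt1.
  - apply/allP => x; rewrite mem_enum /= unity_rootE => hx.
    by rewrite fermat.
  - exact: enum_uniq.
  - by rewrite -cardE cardC1 card_Fp.
have z0 : z != 0 by move: zr; rewrite mem_enum.
have zk : z ^+ k != 1 by rewrite -(prim_order_dvd zprim) hd.
set S := \sum_(x : F | x != 0) x ^+ k.
have : S = z ^+ k * S.
  rewrite {1}/S (reindex_inj (mulfI z0)) /= /S mulr_sumr.
  apply: eq_big => [x|x _]; last by rewrite exprMn.
  by rewrite mulf_eq0 (negbTE z0).
move/eqP; rewrite -subr_eq0 -{1}(mul1r S) -mulrBl mulf_eq0 subr_eq0 eq_sym (negbTE zk).
by move/eqP.
Qed.


Hypothesis hodd : odd p.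

Lemma xpm2 (x : F) : x != 0 -> x ^+ (p - 2) = x^-1.
Proof.
move=> hx; apply: (mulfI hx); rewrite mulfV // -exprS.
have -> : (p - 2).+1 = p.-1 by have := prime_gt1 hp; lia.
exact: fermat.
Qed.

Lemma signpm2 : (-1) ^+ (p - 2) = -1 :> F.
Proof.
rewrite -signr_odd; have := prime_gt1 hp; case: p hodd => [|[|q]] //= hq _.
have -> : (q.+2 - 2 = q)%N by lia.
by rewrite (negPn hq).
Qed.

Lemma altsum (R : comPzRingType) r :
  \sum_(i < r.+1) ('C(r.+1, i.+1)%:R * (-1)^+i) = 1 :> R.
Proof.
have h := exprDn (1 : R) (-1) r.+1.
rewrite subrr expr0n /= big_ord_recl /= expr1n !mul1r expr0 bin0 mulr1n in h.
move/eqP: h; rewrite eq_sym addr_eq0 => /eqP h.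
rewrite [RHS]h -sumrN; apply: eq_bigr => i _.
have -> : bump 0 i = i.+1 by [].
by rewrite expr1n mul1r exprS mulN1r mulNrn opprK mulr_natl.
Qed.

Lemma inner r : (r.+1 < p)%N ->
  \sum_(i < r.+1) ('C(r,i)%:R * (-1)^+i) * (- (i.+1)%:R)^+(p - 2) = - ((r.+1)%:R)^-1 :> F.
Proof.
move=> hr.
have hr0 : (r.+1)%:R != 0 :> F by apply: natF_neq0.
transitivity (- ((r.+1)%:R)^-1 * \sum_(i < r.+1) ('C(r.+1, i.+1)%:R * (-1)^+i) : F); last first.
  by rewrite altsum mulr1.
rewrite mulr_sumr; apply: eq_bigr => i _.
have hi0 : (i.+1)%:R != 0 :> F by apply: natF_neq0 => //; apply: leq_ltn_trans hr; rewrite ltnS -ltnS.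
rewrite (exprNn ((i.+1)%:R)) signpm2 xpm2 //.
have hb : ('C(r, i)%:R : F) = (i.+1)%:R * 'C(r.+1, i.+1)%:R / (r.+1)%:R.
  rewrite -natrM -(mul_bin_diag r.+1 i) natrM /=; field; by rewrite nat1r.
rewrite hb; field.
by rewrite !nat1r hi0 hr0.
Qed.

Lemma cval_Fp k : cval F (p - 2) k.+1 = if (p.-1 %| k)%N then 1 else 0.
Proof.
have e : (p - 2).+1 = p.-1 by have := prime_gt1 hp; lia.
rewrite /cval e.
rewrite (eq_bigr (fun r : 'I_p.-1 => - ((r.+1)%:R : F) ^+ k)); last first.
  move=> r _; rewrite inner; last by have := ltn_ord r; lia.
  rewrite mulrN exprSr mulfK //; apply: natF_neq0 => //; have := ltn_ord r; lia.
by rewrite sumrN powsum; case: ifP; rewrite ?opprK ?oppr0.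
Qed.

End Fp.


Lemma cval_intr (R : pzRingType) n m : ((cval int n m)%:~R : R) = cval R n m.
Proof.
rewrite /cval rmorph_sum; apply: eq_bigr => r _.
rewrite rmorphM rmorphXn rmorph_nat rmorph_sum; congr (_ * _).
apply: eq_bigr => i _.
by rewrite !rmorphM rmorphXn !rmorphXn rmorphN !rmorph_nat rmorph1 rmorphN rmorph_nat.
Qed.

Theorem theorem3p2 (p k : nat) (hp : prime p) (hodd : odd p) :
  exists c : int,
    polyBernC (- (k.+1)%:Z) (p - 2)%N = c%:~R /\
    (if (p.-1 %| k)%N then (c == 1 %[mod p%:Z])%Z else (c == 0 %[mod p%:Z])%Z).
Proof.
exists (cval int (p - 2) k.+1); split.
  by rewrite polyBernC_cval cval_intr.
have hF : ((cval int (p - 2) k.+1)%:~R : 'F_p) = if (p.-1 %| k)%N then 1 else 0.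
  by rewrite cval_intr cval_Fp.
case: ifP hF => hd hF.
  by rewrite eqz_mod_dvd (dvdz_pcharf (pchar_Fp hp)) intrB hF subrr.
by rewrite eqz_mod_dvd subr0 (dvdz_pcharf (pchar_Fp hp)) hF.
Qed.
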